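(* Let $q=2^t$. Then $\dim(\ker\pi_{P_1}\cap C(P,L))=q+1$.
   Context: Let $q$ be a prime power and $V$ a $4$-dimensional vector space over $\mathbb{F}_q$ with a nonsingular alternating bilinear form and symplectic basis $e_0,e_1,e_2,e_3$ with $(e_0,e_3)=(e_1,e_2)=1$. $P$ is the set of $1$-dimensional subspaces of $V$ (points), $L$ the set of totally isotropic $2$-dimensional subspaces (lines). $p_0=\langle e_0\rangle$; $P_1$ is the set of points $(a:b:c:d)$ with $d\ne 0$ (the points not collinear with $p_0$). $\mathbb{F}_2[P]$ is the space of functions $P\to\mathbb{F}_2$, and $C(P,L)$ is the span of the characteristic functions $\chi_\ell$ of all lines $\ell\in L$. $\pi_{P_1}:\mathbb{F}_2[P]\to\mathbb{F}_2[P_1]$ is restriction of functions to $P_1$. *)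

(* Defs.v *)
From HB Require Import structures.
From mathcomp Require Import all_boot all_order all_algebra all_field.
Set Implicit Arguments. Unset Strict Implicit. Unset Printing Implicit Defensive.
Import GRing.Theory.
Local Open Scope ring_scope.

Section Symplectic.
Variable F : finFieldType.

(* V = F^4 as row vectors, basis e0..e3 = coordinates 0..3. *)
Definition V := 'rV[F]_4.

(* The alternating form with (e0,e3) = (e1,e2) = 1. *)
Definition sform (u v : V) : F :=
  u 0 0 * v 0 3 - u 0 3 * v 0 0 + u 0 1 * v 0 2 - u 0 2 * v 0 1.

(* Subspaces of V are represented canonically by square matrices A
   with <<A>> = A (row space). *)
Definition canon (A : 'M[F]_4) : bool := genmx A == A.

Definition is_point (A : 'M[F]_4) : bool := canon A && (\rank A == 1)%N.

Definition totally_isotropic (A : 'M[F]_4) : bool :=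
  [forall u : V, forall v : V,
     ((u <= A)%MS && (v <= A)%MS) ==> (sform u v == 0)].

Definition is_line (A : 'M[F]_4) : bool :=
  [&& canon A, \rank A == 2%N & totally_isotropic A].

Local Notation Point := {A : 'M[F]_4 | is_point A}.
Local Notation Line := {A : 'M[F]_4 | is_line A}.

Definition inP1 (p : Point) : bool :=
  [exists v : V, (v <= val p)%MS && (v 0 3 != 0)].

Local Notation P1 := {p : Point | inP1 p}.

Definition F2P := {ffun Point -> ('F_2)^o}.
Definition F2P1 := {ffun P1 -> ('F_2)^o}.

Definition chi (l : Line) : F2P :=
  [ffun p : Point => ((val p <= val l)%MS)%:R].

Definition CPL : {vspace F2P} := <<[seq chi l | l : Line]>>%VS.

Definition pi_P1 : 'Hom(F2P, F2P1) :=
  linfun (fun f : F2P => [ffun p : P1 => f (val p)] : F2P1).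

End Symplectic.

Notation Point F := {A : 'M[F]_4 | is_point A}.
Notation Line F := {A : 'M[F]_4 | is_line A}.
Notation P1 F := {p : Point F | inP1 p}.

(* Main.v *)
Require Import Defs.
From HB Require Import structures.
From mathcomp Require Import all_boot all_order all_algebra all_field.
Set Implicit Arguments. Unset Strict Implicit. Unset Printing Implicit Defensive.
Import GRing.Theory.
Local Open Scope ring_scope.

Lemma zmod8 (R : zmodType) (a b c d e f g h : R) :
  a + b - (c + d) + (e + f) - (g + h) = (a - c + e - g) + (b - d + f - h).
Proof.
by rewrite !opprD [a + b + _]addrACA [_ + (e + f)]addrACA [_ + (- g + - h)]addrACA.
Qed.
Lemma zmod4 (R : zmodType) (a b c d : R) : b - a + d - c = - (a - b + c - d).
Proof. by rewrite !opprD !opprK addrAC [b - a]addrC. Qed.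

Section S.
Variable F : finFieldType.
Local Notation V := (V F).
Local Notation sform := (@sform F).
Local Notation Point := (Point F).
Local Notation Line := (Line F).

Lemma scE (c : F) (u : V) i j : (c *: u) i j = c * u i j. Proof. by rewrite mxE. Qed.
Lemma adE (u u' : V) i j : (u + u') i j = u i j + u' i j. Proof. by rewrite mxE. Qed.
Lemma sformDl (u u' v : V) : sform (u + u') v = sform u v + sform u' v.
Proof. by rewrite /sform !adE !mulrDl zmod8. Qed.
Lemma sformDr (u v v' : V) : sform u (v + v') = sform u v + sform u v'.
Proof. by rewrite /sform !adE !mulrDr zmod8. Qed.
Lemma sformZl (c : F) (u v : V) : sform (c *: u) v = c * sform u v.
Proof. by rewrite /sform !scE -!mulrA !(mulrBr, mulrDr). Qed.
Lemma sformZr (c : F) (u v : V) : sform u (c *: v) = c * sform u v.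
Proof. by rewrite /sform !scE ![u 0 _ * (c * _)]mulrCA !(mulrBr, mulrDr). Qed.
Lemma sformC (u v : V) : sform u v = - sform v u.
Proof.
by rewrite /sform [v 0 0 * _]mulrC [v 0 3 * _]mulrC [v 0 1 * _]mulrC [v 0 2 * _]mulrC [in RHS]zmod4 opprK.
Qed.
Lemma sform_alt (u : V) : sform u u = 0.
Proof. by rewrite /sform [u 0 3 * _]mulrC [u 0 2 * _]mulrC subrr add0r subrr. Qed.
Lemma sform0l (v : V) : sform 0 v = 0.
Proof. by rewrite -(scale0r (0 : V)) sformZl mul0r. Qed.
Lemma sform0r (v : V) : sform v 0 = 0.
Proof. by rewrite sformC sform0l oppr0. Qed.

Definition e (i : 'I_4) : V := delta_mx 0 i.
Lemma eE (i j : 'I_4) : e i 0 j = (i == j)%:R.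
Proof. by rewrite /e mxE eqxx andTb eq_sym. Qed.
Ltac sfs := rewrite /sform ?eE /=; rewrite ?(mul1r, mul0r, mulr1, mulr0, subr0, addr0, add0r, sub0r, oppr0).
Lemma sform_e0 (n : V) : sform (e 0) n = n 0 3. Proof. by sfs. Qed.
Lemma sform_e1 (n : V) : sform (e 1) n = n 0 2. Proof. by sfs. Qed.
Lemma sform_e2 (n : V) : sform (e 2) n = - n 0 1. Proof. by sfs. Qed.
Lemma sform_e3 (n : V) : sform (e 3) n = - n 0 0. Proof. by sfs. Qed.

Lemma rowV_eq (u v : V) : (forall j : 'I_4, u 0 j = v 0 j) -> u = v.
Proof. by move=> h; apply/rowP => j; rewrite h. Qed.

Lemma ord4 (j : 'I_4) : [\/ j = 0, j = 1, j = 2 | j = 3].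
Proof.
case: j => [[|[|[|[|//]]]] ?]; [apply: Or41|apply: Or42|apply: Or43|apply: Or44]; exact: val_inj.
Qed.

Lemma nondeg (n : V) : n != 0 -> exists i, sform (e i) n != 0.
Proof.
move=> nz; apply/existsP; rewrite -[X in is_true X]negbK negb_exists; apply/negP => /forallP h.
case/negP: nz; apply/eqP/rowV_eq => j.
have h0 := h 0; have h1 := h 1; have h2 := h 2; have h3 := h 3.
rewrite negbK sform_e0 in h0; rewrite negbK sform_e1 in h1.
rewrite negbK sform_e2 oppr_eq0 in h2; rewrite negbK sform_e3 oppr_eq0 in h3.
by rewrite mxE; case: (ord4 j) => ->; apply/eqP.
Qed.

Definition cv (n : V) : 'M[F]_(4,1) := \col_i sform (e i) n.

Lemma sform_sum (u n : V) : sform u n = \sum_(i<4) u 0 i * sform (e i) n.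
Proof.
rewrite {1}(row_sum_delta u).
rewrite (big_morph (fun x => sform x n) (fun x y => sformDl x y n) (sform0l n)).
by apply: eq_bigr => i _; rewrite sformZl.
Qed.

Lemma mulcv (u n : V) : u *m cv n = (sform u n)%:M.
Proof.
apply/matrixP => i j; rewrite !ord1 !mxE eqxx mulr1n sform_sum.
by apply: eq_bigr => k _; rewrite mxE.
Qed.

Lemma mx11_eq0 (x : F) : ((x%:M : 'M[F]_1) == 0) = (x == 0).
Proof.
apply/eqP/eqP => [/matrixP/(_ 0 0)|->]; last by apply/matrixP => i j; rewrite !mxE mul0rn.
by rewrite !mxE eqxx mulr1n.
Qed.

Lemma sub_ker_cv m (A : 'M_(m,4)) (n : V) :
  (A <= kermx (cv n))%MS = [forall i, sform (row i A) n == 0].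
Proof.
apply/row_subP/forallP => h i; first by rewrite -mx11_eq0 -mulcv -sub_kermx.
by rewrite sub_kermx mulcv mx11_eq0.
Qed.

Lemma sub_ker_cv1 (u n : V) : (u <= kermx (cv n))%MS = (sform u n == 0).
Proof. by rewrite sub_kermx mulcv mx11_eq0. Qed.

Lemma rank_kercv (n : V) : n != 0 -> \rank (kermx (cv n)) = 3%N.
Proof.
move=> nz; rewrite mxrank_ker.
have r1 : \rank (cv n) = 1%N.
  apply/eqP; rewrite eqn_leq rank_leq_col lt0n mxrank_eq0.
  case: (nondeg nz) => i hi; apply/eqP => /matrixP/(_ i 0); rewrite !mxE => h.
  by rewrite h eqxx in hi.
by rewrite r1.
Qed.

Lemma pt_is_point (v : V) : v != 0 -> is_point (genmx v).
Proof. by move=> nz; rewrite /is_point /canon genmx_id eqxx mxrank_gen rank_rV nz. Qed.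

Lemma point_gen (p : Point) (u : V) : u != 0 -> (u <= val p)%MS -> val p = genmx u.
Proof.
case: p => A /andP[/eqP cA /eqP rA] /= nz su.
have eqA : (u == A)%MS by rewrite -(mxrank_leqif_eq su).2 rank_rV nz rA.
by rewrite -{1}cA; apply/esym/genmxP.
Qed.

Lemma point_nz (p : Point) : nz_row (val p) != 0.
Proof.
rewrite nz_row_eq0 -mxrank_eq0; case: p => A /andP[_ /eqP ->] //.
Qed.

Lemma point_rank (p : Point) : \rank (val p) = 1%N.
Proof. by case: p => A /andP[_ /eqP ->]. Qed.

Lemma point_eq (p q : Point) : val p = val q -> p = q.
Proof. exact: val_inj. Qed.

Definition pi0 := kermx (cv (e 0)).

Lemma sub_pi0 (u : V) : (u <= pi0)%MS = (u 0 3 == 0).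
Proof. by rewrite sub_ker_cv1 sformC sform_e0 oppr_eq0. Qed.

Lemma inP1E (p : Point) : inP1 p = ~~ (val p <= pi0)%MS.
Proof.
apply/existsP/idP.
  case=> v /andP[sv nz3]; apply/negP => sp.
  by have := submx_trans sv sp; rewrite sub_pi0 (negbTE nz3).
case/row_subPn => i ni; exists (row i (val p)); rewrite sub_pi0 in ni.
by rewrite row_sub ni.
Qed.

Lemma line_ti (l : Line) (u v : V) : (u <= val l)%MS -> (v <= val l)%MS -> sform u v = 0.
Proof.
case: l => A /and3P[_ _ /forallP h] /= su sv.
by have /forallP/(_ v) := h u; rewrite su sv /= => /eqP.
Qed.

Lemma line_rank (l : Line) : \rank (val l) = 2%N.
Proof. by case: l => A /and3P[_ /eqP ->]. Qed.

Lemma line_sub_ker (l : Line) (n : V) : (n <= val l)%MS -> (val l <= kermx (cv n))%MS.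
Proof.
move=> sn; rewrite sub_ker_cv; apply/forallP => i.
by rewrite (line_ti (row_sub i _) sn).
Qed.

Lemma meet_le1 m (A : 'M[F]_(m,4)) (H : 'M[F]_(2,4)) :
  \rank H = 2%N -> ~~ (H <= A)%MS -> (\rank (A :&: H) <= 1)%N.
Proof.
move=> rH nHA; rewrite leqNgt; apply/negP => r2.
have sH : (A :&: H <= H)%MS := capmxSr A H.
have le := mxrankS sH.
have eq2 : \rank (A :&: H) = 2%N by apply/eqP; rewrite eqn_leq r2 andbT; move: le; rewrite rH.
have : (H <= A :&: H)%MS by rewrite -(mxrank_leqif_sup sH).2 eq2 rH.
by rewrite sub_capmx (negbTE nHA).
Qed.

Lemma meet_pos (l : Line) (H K : 'M[F]_(2,4)) : \rank K = 2%N ->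
  (forall n : V, n != 0 -> (n <= H)%MS -> (K <= kermx (cv n))%MS) ->
  (0 < \rank (val l :&: H))%N -> (0 < \rank (val l :&: K))%N.
Proof.
move=> rK hK pos.
set n := nz_row (val l :&: H)%MS.
have nz : n != 0 by rewrite nz_row_eq0 -mxrank_eq0 -lt0n.
have sn : (n <= val l :&: H)%MS := nz_row_sub _.
rewrite sub_capmx in sn; case/andP: sn => snl snH.
have s : (val l + K <= kermx (cv n))%MS by rewrite addsmx_sub line_sub_ker // hK.
have := mxrankS s; rewrite rank_kercv // => le3.
have := mxrank_sum_cap (val l) K; rewrite line_rank rK => eq4.
rewrite lt0n; apply/eqP => r0; rewrite r0 addn0 in eq4.
by rewrite eq4 in le3.
Qed.

Lemma point_eqmx (p : Point) m (B : 'M[F]_(m,4)) : (val p == B)%MS -> val p = genmx B.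
Proof. by case: p => A /andP[/eqP cA _] /= h; rewrite -cA; apply/genmxP. Qed.

Lemma card_pts m (A : 'M[F]_(m,4)) :
  (\rank A <= 1)%N -> #|[set p : Point | (val p <= A)%MS]| = \rank A.
Proof.
case: (ltngtP (\rank A) 1) => // [lt1 _ | eq1 _].
  have A0 : A = 0 by apply/eqP; rewrite -mxrank_eq0 -leqn0 -ltnS.
  rewrite A0 mxrank0; apply/eqP; rewrite cards_eq0; apply/eqP/setP => p.
  rewrite !inE; apply/negbTE/negP => /submx0null h.
  by have := point_rank p; rewrite h mxrank0.
have isP : is_point (genmx A).
  by rewrite /is_point /canon genmx_id eqxx mxrank_gen eq1.
pose P : Point := exist _ (genmx A) isP.
suff -> : [set p : Point | (val p <= A)%MS] = [set P] by rewrite cards1 eq1.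
apply/setP => p; rewrite !inE; apply/idP/eqP => [sp | ->]; last by rewrite /= genmxE.
apply: val_inj; apply: point_eqmx.
by rewrite -(mxrank_leqif_eq sp).2 point_rank eq1.
Qed.

Lemma sum_ind (C Q : pred Point) :
  \sum_(p | C p) ((Q p)%:R : ('F_2)^o) = (#|[set p | C p && Q p]|)%:R.
Proof.
rewrite -sum1_card natr_sum big_mkcond [RHS]big_mkcond /=.
by apply: eq_bigr => p _; rewrite inE; case: (C p); case: (Q p).
Qed.

Lemma ffD (f g : F2P F) p : (f + g) p = f p + g p.
Proof. by rewrite ffunE. Qed.
Lemma ffZ (c : ('F_2)^o) (f : F2P F) p : (c *: f) p = c * f p.
Proof. by rewrite ffunE. Qed.
Lemma ff0 p : (0 : F2P F) p = 0.
Proof. by rewrite ffunE. Qed.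

Lemma span_zero (phi : F2P F -> ('F_2)^o) :
  (forall f g, phi (f + g) = phi f + phi g) ->
  (forall c f, phi (c *: f) = c * phi f) ->
  (forall l : Line, phi (chi l) = 0) -> forall f, f \in CPL F -> phi f = 0.
Proof.
move=> hD hZ hl f; rewrite /CPL; set s := [seq chi l | l : Line] => fin.
have phi0 : phi 0 = 0 by rewrite -(scale0r (0 : F2P F)) hZ mul0r.
rewrite (@coord_span _ _ _ (in_tuple s) f fin).
rewrite (big_morph phi hD phi0) big1 // => i _.
rewrite hZ.
have : (in_tuple s)`_i \in s by rewrite mem_nth.
by case/mapP => l _ ->; rewrite hl mulr0.
Qed.

Definition phiw (w : Point -> ('F_2)^o) (f : F2P F) := \sum_p w p * f p.

Lemma phiw_zero (w : Point -> ('F_2)^o) :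
  (forall l : Line, phiw w (chi l) = 0) -> forall f, f \in CPL F -> phiw w f = 0.
Proof.
move=> hl; apply: span_zero => //.
  by move=> f g; rewrite /phiw -big_split; apply: eq_bigr => p _; rewrite ffD mulrDr.
by move=> c f; rewrite /phiw mulr_sumr; apply: eq_bigr => p _; rewrite ffZ mulrCA.
Qed.

Lemma F2_add_self (x : ('F_2)^o) : x + x = 0.
Proof. by case: x => [[|[|[]]] i] //; apply/val_inj. Qed.

Lemma col2_decomp (n a b : V) : (n <= col_mx a b)%MS -> exists c d : F, n = c *: a + d *: b.
Proof.
case/submxP => D ->; rewrite -[D]hsubmxK mul_row_col.
set l := lsubmx D; set r := rsubmx D; exists (l 0 0), (r 0 0).
by rewrite {1}[l]mx11_scalar {1}[r]mx11_scalar !mul_scalar_mx.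
Qed.

Lemma col_sub_l (a b : V) : (a <= col_mx a b)%MS.
Proof. by have := submx_refl (col_mx a b); rewrite col_mx_sub => /andP[]. Qed.
Lemma col_sub_r (a b : V) : (b <= col_mx a b)%MS.
Proof. by have := submx_refl (col_mx a b); rewrite col_mx_sub => /andP[]. Qed.

Lemma rank2 (a b : V) : sform a b != 0 -> \rank (col_mx a b) = 2%N.
Proof.
move=> nz; have a0 : a != 0 by apply: contraNneq nz => ->; rewrite sform0l.
apply/eqP; rewrite eqn_leq rank_leq_row /= ltnNge; apply/negP => le1.
have sa := col_sub_l a b.
have r1 : \rank (col_mx a b) = \rank a.
  apply/eqP; rewrite eqn_leq (mxrankS sa) andbT rank_rV a0; exact: le1.
have : (col_mx a b <= a)%MS by rewrite -(mxrank_leqif_sup sa).2 r1.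
rewrite col_mx_sub => /andP[_ /sub_rVP[c bc]].
by move: nz; rewrite bc sformZr sform_alt mulr0 eqxx.
Qed.

Lemma orth (x z y w : V) : sform x z != 0 -> sform y w != 0 ->
  sform x y = 0 -> sform x w = 0 -> sform z y = 0 -> sform z w = 0 ->
  forall f, f \in CPL F ->
  \sum_(p | (val p <= col_mx x z)%MS) f p + \sum_(p | (val p <= col_mx y w)%MS) f p = 0.
Proof.
move=> nxz nyw oxy oxw ozy ozw.
set H := col_mx x z; set K := col_mx y w.
pose w0 (p : Point) : ('F_2)^o := ((val p <= H)%MS)%:R + ((val p <= K)%MS)%:R.
have E : forall f : F2P F, \sum_(p | (val p <= H)%MS) f p + \sum_(p | (val p <= K)%MS) f p
   = phiw w0 f.
  move=> f; rewrite /phiw !(big_mkcond (fun p : Point => (val p <= _)%MS)) -big_split /=.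
  apply: eq_bigr => p _; rewrite /w0 mulrDl.
  by case: (val p <= H)%MS; case: (val p <= K)%MS; rewrite ?mul1r ?mul0r.
move=> f fin; rewrite E; apply: phiw_zero fin => l; rewrite -E.
have rH := rank2 nxz; have rK := rank2 nyw.
have nHl : ~~ (H <= val l)%MS.
  apply/negP; rewrite col_mx_sub => /andP[sx sz].
  by move: nxz; rewrite (line_ti sx sz) eqxx.
have nKl : ~~ (K <= val l)%MS.
  apply/negP; rewrite col_mx_sub => /andP[sx sz].
  by move: nyw; rewrite (line_ti sx sz) eqxx.
have hHK : forall n : V, n != 0 -> (n <= H)%MS -> (K <= kermx (cv n))%MS.
  move=> n _ /col2_decomp[c [d ->]].
  rewrite col_mx_sub !sub_ker_cv1 sformC [sform w _]sformC.
  by rewrite !sformDl !sformZl oxy ozy oxw ozw !mulr0 addr0 oppr0 eqxx.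
have hKH : forall n : V, n != 0 -> (n <= K)%MS -> (H <= kermx (cv n))%MS.
  move=> n _ /col2_decomp[c [d ->]].
  by rewrite col_mx_sub !sub_ker_cv1 !sformDr !sformZr oxy ozy oxw ozw !mulr0 addr0 eqxx.
have le1H := meet_le1 rH nHl; have le1K := meet_le1 rK nKl.
have eqr : \rank (val l :&: H) = \rank (val l :&: K).
  move: (@meet_pos l H K rK hHK) (@meet_pos l K H rH hKH) le1H le1K.
  case: (\rank (val l :&: H)) => [|[|//]]; case: (\rank (val l :&: K)) => [|[|//]] //.
    by move=> _ /(_ isT).
  by move=> /(_ isT).
have cnt : forall (A : 'M[F]_(2,4)), (\rank (val l :&: A) <= 1)%N ->
  \sum_(p | (val p <= A)%MS) chi l p = (\rank (val l :&: A))%:R.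
  move=> A le; rewrite -card_pts //.
  under eq_bigr => p _ do rewrite ffunE.
  rewrite sum_ind; congr (_ %:R); apply: eq_card => p; rewrite !inE sub_capmx andbC.
  done.
by rewrite !cnt // eqr F2_add_self.
Qed.

Definition pif (f : F2P F) : F2P1 F := [ffun p : P1 F => f (val p)].
Fact pif_linear : linear pif.
Proof. by move=> c f g; apply/ffunP => p; rewrite !ffunE. Qed.

Lemma piE (f : F2P F) : pi_P1 F f = pif f.
Proof.
pose flM := GRing.isLinear.Build _ _ _ _ pif pif_linear.
pose fL : {linear _ -> _} := HB.pack pif flM.
exact: (lfunE fL f).
Qed.

Lemma memker (f : F2P F) : f \in lker (pi_P1 F) -> forall p : Point, inP1 p -> f p = 0.
Proof.
rewrite memv_ker piE => /eqP h p ip.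
by have := congr1 (fun g : F2P1 F => g (exist _ p ip)) h; rewrite !ffunE.
Qed.

Lemma kerI (f : F2P F) : (forall p : Point, inP1 p -> f p = 0) -> f \in lker (pi_P1 F).
Proof.
move=> h; rewrite memv_ker piE; apply/eqP/ffunP => q; rewrite !ffunE.
exact: h (valP q).
Qed.

Definition mkpt (v : V) (nz : v != 0) : Point := exist (fun A => is_point A) (genmx v) (pt_is_point nz).

Definition vo (o : option F) : V := if o is Some s then e 1 + s *: e 2 else e 2.
Definition wo (o : option F) : V := if o is Some _ then - e 2 else e 1.

Lemma sformNl (u v : V) : sform (- u) v = - sform u v.
Proof. by rewrite -scaleN1r sformZl mulN1r. Qed.
Lemma sformNr (u v : V) : sform u (- v) = - sform u v.
Proof. by rewrite -scaleN1r sformZr mulN1r. Qed.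

Ltac bsimp := rewrite ?sformDl ?sformDr ?sformZl ?sformZr ?sformNl ?sformNr
  ?sform_e0 ?sform_e1 ?sform_e2 ?sform_e3 ?adE ?scE ?eE /=
  ?(mul1r, mul0r, mulr1, mulr0, subr0, addr0, add0r, sub0r, oppr0, opprK).


Lemma vo3 o : vo o 0 3 = 0.
Proof. by case: o => [s|] /=; bsimp. Qed.
Lemma vo_e0 o : sform (e 0) (vo o) = 0.
Proof. by rewrite sform_e0 vo3. Qed.
Lemma vo_wo o : sform (vo o) (wo o) = -1.
Proof. by case: o => [s|] /=; bsimp. Qed.
Lemma e3_vo o : sform (e 3) (vo o) = 0.
Proof. by case: o => [s|] /=; bsimp. Qed.
Lemma vo_e3 o : sform (vo o) (e 3) = 0.
Proof. by case: o => [s|] /=; bsimp. Qed.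
Lemma e0_wo o : sform (e 0) (wo o) = 0.
Proof. by case: o => [s|] /=; bsimp. Qed.
Lemma e3_wo o : sform (e 3) (wo o) = 0.
Proof. by case: o => [s|] /=; bsimp. Qed.
Lemma wo3 o : wo o 0 3 = 0.
Proof. by case: o => [s|] /=; rewrite ?mxE /=; bsimp. Qed.
Lemma vo_vo o o' : o != o' -> sform (vo o') (vo o) != 0.
Proof.
case: o o' => [s|] [s'|] //= ne; bsimp; rewrite ?oppr_eq0 ?oner_eq0 //.
by rewrite mulrN1 subr_eq0.
Qed.
Lemma vo_nz o : vo o != 0.
Proof.
apply/eqP => h; have := vo_wo o; rewrite h sform0l => /eqP.
by rewrite eq_sym oppr_eq0 oner_eq0.
Qed.
Lemma e0_nz : e 0 != 0.
Proof. apply/eqP => h; have : sform (e 0) (e 3) = 1 by bsimp.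
by rewrite h sform0l => /eqP; rewrite eq_sym oner_eq0. Qed.

Lemma rank2g (a b c : V) : sform a c != 0 -> sform b c = 0 -> b != 0 -> \rank (col_mx a b) = 2%N.
Proof.
move=> nz bc0 b0; have a0 : a != 0 by apply: contraNneq nz => ->; rewrite sform0l.
apply/eqP; rewrite eqn_leq rank_leq_row /= ltnNge; apply/negP => le1.
have sa := col_sub_l a b.
have r1 : \rank (col_mx a b) = \rank a.
  apply/eqP; rewrite eqn_leq (mxrankS sa) andbT rank_rV a0; exact: le1.
have : (col_mx a b <= a)%MS by rewrite -(mxrank_leqif_sup sa).2 r1.
rewrite col_mx_sub => /andP[_ /sub_rVP[k bk]].
move: bc0; rewrite bk sformZl => /eqP; rewrite mulf_eq0 (negbTE nz) orbF => /eqP k0.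
by move: b0; rewrite bk k0 scale0r eqxx.
Qed.

Lemma ti2 (a b : V) : sform a b = 0 -> totally_isotropic (genmx (col_mx a b)).
Proof.
move=> hab; apply/forallP => u; apply/forallP => v; apply/implyP => /andP[].
rewrite !genmxE => /col2_decomp[c [d ->]] /col2_decomp[c' [d' ->]].
by rewrite !sformDl !sformDr !sformZl !sformZr !sform_alt (sformC b a) hab !(oppr0, mulr0, addr0).
Qed.

Lemma Lo_line o : is_line (genmx (col_mx (e 0) (vo o))).
Proof.
rewrite /is_line /canon genmx_id eqxx mxrank_gen (@rank2g _ _ (e 3)) ?vo_e3 ?vo_nz //=.
  by apply: ti2; rewrite vo_e0.
by bsimp; rewrite oner_eq0.
Qed.

Definition Lo o : Line := exist (fun A => is_line A) _ (Lo_line o).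
Definition p0 : Point := mkpt e0_nz.
Definition xo o : Point := mkpt (vo_nz o).
Lemma pa_nz o a : a *: e 0 + vo o != 0.
Proof.
apply/eqP => h; have := vo_wo o.
have : sform (a *: e 0 + vo o) (wo o) = 0 by rewrite h sform0l.
rewrite sformDl sformZl e0_wo mulr0 add0r => ->.
by move/eqP; rewrite eq_sym oppr_eq0 oner_eq0.
Qed.
Definition pa o a : Point := mkpt (pa_nz o a).

Lemma Lo_pi0 o : (val (Lo o) <= pi0)%MS.
Proof. by rewrite /= genmxE col_mx_sub !sub_pi0 vo3 eE /= mulr0n eqxx. Qed.

Lemma chi_Lo_P1 o p : inP1 p -> chi (Lo o) p = 0.
Proof.
rewrite inP1E ffunE => np; case sp: (val p <= val (Lo o))%MS => //.
by move: np; rewrite (submx_trans sp (Lo_pi0 o)).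
Qed.

Lemma pa_Lo o a o' : (val (pa o a) <= val (Lo o'))%MS = (o == o').
Proof.
rewrite /= !genmxE; apply/idP/eqP => [s | <-]; last first.
  by rewrite addmx_sub ?scalemx_sub ?col_sub_l ?col_sub_r.
apply/eqP; apply/negPn/negP => ne; move/col2_decomp: s => [c [d eq]].
have := congr1 (sform (vo o')) eq.
rewrite !sformDr !sformZr sform_alt (sformC (vo o') (e 0)) vo_e0 oppr0 !mulr0 !add0r => h.
by move: (vo_vo ne); rewrite h eqxx.
Qed.

Lemma p0_Lo o : (val p0 <= val (Lo o))%MS.
Proof. by rewrite /= !genmxE col_sub_l. Qed.

Lemma mdiv (x y : F) : y != 0 -> y * (x / y) = x.
Proof. by move=> y0; rewrite mulrC divfK. Qed.

Lemma classify (u : V) : u != 0 -> u 0 3 = 0 ->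
  (exists c, c != 0 /\ u = c *: e 0) \/
  (exists o a c, c != 0 /\ u = c *: (a *: e 0 + vo o)).
Proof.
move=> nz u3.
case: (eqVneq (u 0 1) 0) => u1.
  case: (eqVneq (u 0 2) 0) => u2.
    left; exists (u 0 0); split.
      apply: contraNneq nz => u0; apply/eqP/rowV_eq => j; rewrite mxE.
      by case: (ord4 j) => ->.
    apply/rowV_eq => j; rewrite scE eE; case: (ord4 j) => -> /=;
      by rewrite ?mulr1 ?mulr0.
  right; exists None, (u 0 0 / u 0 2), (u 0 2); split => //.
  apply/rowV_eq => j; rewrite /vo !(scE, adE, eE); case: (ord4 j) => -> /=;
    by rewrite ?(mulr1, mulr0, addr0, add0r, mdiv).
right; exists (Some (u 0 2 / u 0 1)), (u 0 0 / u 0 1), (u 0 1); split => //.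
apply/rowV_eq => j; rewrite /vo !(scE, adE, eE); case: (ord4 j) => -> /=;
  by rewrite ?(mulr1, mulr0, addr0, add0r, mdiv).
Qed.

Lemma nzrow_data (p : Point) : (val p <= pi0)%MS ->
  let u := nz_row (val p) in [/\ u != 0, (u <= val p)%MS, u 0 3 = 0 & val p = genmx u].
Proof.
move=> sp0 u.
have un : u != 0 := point_nz p.
have su : (u <= val p)%MS := nz_row_sub _.
split => //; last exact: point_gen.
by apply/eqP; rewrite -sub_pi0 (submx_trans su sp0).
Qed.

Lemma gen_scale (c : F) (x : V) : c != 0 -> genmx (c *: x) = genmx x.
Proof. by move=> c0; apply/genmxP/eqmxP/eqmx_scale. Qed.

Lemma sum_single (x z : V) (xnz : x != 0) (f : F2P F) :
  (forall p, inP1 p -> f p = 0) -> x 0 3 = 0 -> z 0 3 = 1 ->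
  \sum_(p | (val p <= col_mx x z)%MS) f p = f (mkpt xnz).
Proof.
move=> fk x3 z3.
rewrite (bigD1 (mkpt xnz)) /=; last by rewrite genmxE col_sub_l.
rewrite big1 ?addr0 // => p /andP[sp ne].
case ip: (inP1 p); first exact: fk.
move: ip; rewrite inP1E => /negbFE sp0.
case: (nzrow_data sp0) => un su u3 pu.
case/col2_decomp: (submx_trans su sp) => c [d ud].
have d0 : d = 0 by move: u3; rewrite ud adE !scE x3 z3 mulr0 mulr1 add0r.
have c0 : c != 0 by apply: contraNneq un => c0; rewrite ud c0 d0 !scale0r addr0.
case/negP: ne; apply/eqP/val_inj; rewrite /= pu ud d0 scale0r addr0.
exact: gen_scale.
Qed.

Lemma F2_eq (x y : ('F_2)^o) : x + y = 0 -> x = y.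
Proof. by rewrite -(F2_add_self y) => /addIr. Qed.

Lemma e3_3 : e 3 0 3 = 1. Proof. by rewrite eE. Qed.

Lemma sameA (f : F2P F) : f \in CPL F -> (forall p, inP1 p -> f p = 0) ->
  forall o a, f (pa o a) = f (xo o).
Proof.
move=> fin fk o a.
case: (eqVneq a 0) => [-> | a0].
  by congr (f _); apply: val_inj; rewrite /= scale0r add0r.
set x := a *: e 0 + vo o; set w := a *: wo o + e 3.
have h1 : sform x (e 3) = a by rewrite /x sformDl sformZl vo_e3 sform_e0 eE mulr1 addr0.
have h2 : sform (vo o) w = - a by rewrite /w sformDr sformZr vo_wo vo_e3 addr0 mulrN1.
have h3 : sform x (vo o) = 0 by rewrite /x sformDl sformZl vo_e0 sform_alt mulr0 addr0.
have h4 : sform x w = 0.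
  rewrite /x /w !sformDl !sformDr !sformZl !sformZr e0_wo sform_e0 eE vo_wo vo_e3.
  by rewrite /= !mulr0 addr0 mulr1 add0r mulrN1 subrr.
have h6 : sform (e 3) w = 0 by rewrite /w sformDr sformZr e3_wo sform_alt mulr0 addr0.
have x3 : x 0 3 = 0 by rewrite /x adE scE eE vo3 /= mulr0 addr0.
have w3 : w 0 3 = 1 by rewrite /w adE scE wo3 e3_3 mulr0 add0r.
have := orth _ _ h3 h4 (e3_vo o) h6 fin.
rewrite h1 h2 oppr_eq0 a0 => /(_ isT isT).
rewrite (sum_single (pa_nz o a) fk x3 e3_3) (sum_single (vo_nz o) fk (vo3 o) w3).
exact: F2_eq.
Qed.

Lemma vo0 o : vo o 0 0 = 0.
Proof. by case: o => [s|] /=; rewrite ?adE ?scE !eE /= ?mulr0 ?addr0. Qed.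

Lemma vo_K o : (vo o <= col_mx (e 1) (e 2))%MS.
Proof.
case: o => [s|] /=; last exact: col_sub_r.
by rewrite addmx_sub ?col_sub_l // scalemx_sub // col_sub_r.
Qed.

Lemma K_pts : [set p : Point | (val p <= col_mx (e 1) (e 2))%MS] = xo @: setT.
Proof.
apply/setP => p; rewrite inE; apply/idP/imsetP => [sp | [o _ ->]]; last first.
  by rewrite /= genmxE vo_K.
have sp0 : (val p <= pi0)%MS.
  apply: submx_trans sp _; rewrite col_mx_sub !sub_pi0 !eE /=.
  by rewrite mulr0n eqxx.
case: (nzrow_data sp0) => un su u3 pu.
set u := nz_row (val p) in un su u3 pu.
case/col2_decomp: (submx_trans su sp) => c [d ud].
have u0 : u 0 0 = 0 by rewrite ud adE !scE !eE /= !mulr0 addr0.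
case: (classify un u3) => [[c' [c0 uc]] | [o [a [c' [c0 uc]]]]].
  by move: u0; rewrite uc scE eE /= mulr1 => /eqP; rewrite (negbTE c0).
have a0 : a = 0.
  move: u0; rewrite uc scE adE scE eE vo0 /= mulr1 addr0 => /eqP.
  by rewrite mulf_eq0 (negbTE c0) => /eqP.
exists o => //; apply: val_inj; rewrite /= pu uc a0 scale0r add0r.
exact: gen_scale.
Qed.

Lemma xo_inj : injective xo.
Proof.
move=> o o' h; apply/eqP; apply/negPn/negP => ne.
have : (vo o <= genmx (vo o'))%MS.
  by rewrite -[genmx (vo o')]/(val (xo o')) -h /= genmxE.
rewrite genmxE => /sub_rVP[k hk].
by have := vo_vo ne; rewrite hk sformZr sform_alt mulr0 eqxx.
Qed.

Lemma sumK (f : F2P F) :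
  \sum_(p | (val p <= col_mx (e 1) (e 2))%MS) f p = \sum_(o : option F) f (xo o).
Proof.
rewrite (eq_bigl (fun p => p \in xo @: setT)); last by move=> p; rewrite -K_pts inE.
rewrite big_imset /=; last by move=> ? ? _ _; exact: xo_inj.
by apply: eq_bigl => o; rewrite in_setT.
Qed.

Lemma sameB (f : F2P F) : f \in CPL F -> (forall p, inP1 p -> f p = 0) ->
  f p0 = \sum_(o : option F) f (xo o).
Proof.
move=> fin fk.
have h1 : sform (e 0) (e 3) != 0 by bsimp; rewrite oner_eq0.
have h2 : sform (e 1) (e 2) != 0 by bsimp; rewrite oner_eq0.
have h3 : sform (e 0) (e 1) = 0 by bsimp.
have h4 : sform (e 0) (e 2) = 0 by bsimp.
have h5 : sform (e 3) (e 1) = 0 by bsimp.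
have h6 : sform (e 3) (e 2) = 0 by bsimp.
have := orth h1 h2 h3 h4 h5 h6 fin.
have e03 : e 0 0 3 = 0 by rewrite eE.
rewrite (sum_single e0_nz fk e03 e3_3) sumK.
exact: F2_eq.
Qed.

Lemma decomp (f : F2P F) : f \in CPL F -> (forall p, inP1 p -> f p = 0) ->
  f = \sum_(o : option F) f (xo o) *: chi (Lo o).
Proof.
move=> fin fk; apply/ffunP => p; rewrite sum_ffunE.
under eq_bigr => o _ do rewrite ffZ.
case ip: (inP1 p).
  by rewrite fk // big1 // => o _; rewrite chi_Lo_P1 // mulr0.
move: ip; rewrite inP1E => /negbFE sp0.
case: (nzrow_data sp0) => un su u3 pu.
case: (classify un u3) => [[c [c0 uc]] | [o [a [c [c0 uc]]]]].
  have -> : p = p0 by apply: val_inj; rewrite /= pu uc gen_scale.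
  by rewrite (sameB fin fk); apply: eq_bigr => o _; rewrite ffunE p0_Lo /= mulr1.
have -> : p = pa o a by apply: val_inj; rewrite /= pu uc gen_scale.
rewrite (sameA fin fk) (bigD1 o) //= big1 ?addr0.
  by rewrite ffunE pa_Lo eqxx mulr1.
by move=> o' ne; rewrite ffunE pa_Lo eq_sym (negbTE ne) mulr0.
Qed.

Lemma xo_Lo o o' : (val (xo o) <= val (Lo o'))%MS = (o == o').
Proof. by rewrite -(pa_Lo o 0 o') /= scale0r add0r. Qed.

Definition Xs := [seq chi (Lo o) | o <- enum {: option F}].

Lemma Lo_in o : chi (Lo o) \in (lker (pi_P1 F) :&: CPL F)%VS.
Proof.
rewrite memv_cap; apply/andP; split.
  by apply: kerI => p ip; exact: chi_Lo_P1.
by rewrite /CPL memv_span //; apply: map_f; rewrite mem_enum.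
Qed.

Lemma freeXs : free Xs.
Proof.
apply/(@freeP _ _ _ (in_tuple Xs)) => k hk i.
set es := enum {: option F}.
have szX : size Xs = size es by rewrite size_map.
have ltn_i : (i < size es)%N by rewrite -szX.
have Xj : forall j : 'I_(size Xs), (in_tuple Xs)`_j = chi (Lo (nth None es j)).
  move=> j; rewrite /= (nth_map None) // -szX //.
have := congr1 (fun g : F2P F => g (xo (nth None es i))) hk.
rewrite sum_ffunE ff0 (bigD1 i) //= big1 ?addr0.
  by rewrite ffZ Xj ffunE xo_Lo eqxx mulr1.
move=> j ne; rewrite ffZ Xj ffunE xo_Lo nth_uniq ?enum_uniq //; last by rewrite -szX.
suff -> : (nat_of_ord i == nat_of_ord j) = false by rewrite mulr0.
by apply/negbTE; rewrite eq_sym; exact: ne.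
Qed.
End S.

Theorem corollary12 (F : finFieldType) (t : nat) :
  (0 < t)%N -> #|F| = (2 ^ t)%N ->
  \dim (lker (pi_P1 F) :&: CPL F)%VS = (#|F| + 1)%N.
Proof.
move=> _ _.
have E : (lker (pi_P1 F) :&: CPL F)%VS = <<Xs F>>%VS.
  apply/eqP; rewrite eqEsubv; apply/andP; split.
    apply/subvP => f /memv_capP [fk fin].
    rewrite (decomp fin (memker fk)); apply: memv_suml => o _; apply: memvZ.
    by apply: memv_span; apply: map_f; rewrite mem_enum.
  by apply/span_subvP => g /mapP [o _ ->]; exact: Lo_in.
by rewrite E (eqP (freeXs F)) size_map -cardE card_option addn1.
Qed.
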